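(* Let $g\in\mathbb{S}^{d-1}$ be fixed, let $k\ge1$, and let $(\lambda_i,u_i)\in\mathbb{R}\times\mathbb{S}^{d-1}$ for $i\in[k]$. Let $T\subseteq[k]$ and for even $\ell\ge 2$ define $$M_\ell=\sum_{i\in T}\lambda_i\langle u_i,g\rangle^{\ell-2}u_iu_i^\top\in\mathbb{R}^{d\times d}.$$ Let $\eta\ge0$ and let $\widehat M_\ell\in\mathbb{R}^{d\times d}$ satisfy $\|M_\ell-\widehat M_\ell\|_{\mathrm{op}}\le\eta$ for all $\ell\in\{2,4,\dots,2k,2k+2\}$. Let $V$ be the span of the top-$k$ singular vectors of all of $\widehat M_2,\widehat M_4,\dots,\widehat M_{2k+2}$. For $i\in T$ let $u_i'$ be the orthogonal projection of $u_i$ onto $V$ and $r_i=u_i-u_i'$. Let $C_1>0$, $C_2\ge0$. If for some $i\in T$ and some $\ell\in\{2,4,\dots,2k+2\}$ $$r_i^\top M_\ell r_i\ge C_1\langle r_i,u_i\rangle^2-C_2,$$ then, for $\upsilon=c\big((\eta/C_1)^{1/2}+(C_2/C_1)^{1/4}\big)$ with $c$ a suitable absolute constant, every $\upsilon$-net (in Euclidean distance) of the unit vectors of $V$ contains a vector within Euclidean distance $2\upsilon$ of $u_i$.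
   Context: A $\upsilon$-net of a set $X$ is a subset $\mathcal{S}\subseteq X$ such that every point of $X$ is within distance $\upsilon$ of some point of $\mathcal{S}$. *)

(* Defs.v *)
From HB Require Import structures.
From Stdlib Require Import Reals.
From mathcomp Require Import all_boot all_order all_algebra.
From mathcomp Require Import boolp classical_sets reals Rstruct.
Set Implicit Arguments. Unset Strict Implicit. Unset Printing Implicit Defensive.
Import Order.TTheory GRing.Theory Num.Theory.
Local Open Scope ring_scope.
Local Open Scope classical_set_scope.

Definition dotv (d : nat) (x y : 'rV[R]_d) : R := \sum_(j < d) x 0 j * y 0 j.
Definition vnorm (d : nat) (x : 'rV[R]_d) : R := Num.sqrt (dotv x x).

Definition unitv (d : nat) (x : 'rV[R]_d) : Prop := vnorm x = 1.

(* Operator (spectral) norm: sup over unit x of |A x| (x as a column vector,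
   A x = (x A^T)^T). *)
Definition opnorm (d : nat) (A : 'M[R]_d) : R :=
  sup [set vnorm (x *m A^T) | x in [set x : 'rV[R]_d | unitv x]].

Definition orthonormal (d n : nat) (w : 'I_n -> 'rV[R]_d) : Prop :=
  forall i j : 'I_n, dotv (w i) (w j) = (if i == j then 1 else 0).

(* A singular value decomposition  A = sum_j s_j y_j w_j^T  (column
   convention: A = \sum_j s_j (y_j)(w_j)^T), with orthonormal left singular
   vectors y, orthonormal right singular vectors w and singular values s
   nonnegative and sorted nonincreasingly.  *)
Definition is_svd (d : nat) (A : 'M[R]_d) (y w : 'I_d -> 'rV[R]_d)
    (s : 'I_d -> R) : Prop :=
  [/\ orthonormal y, orthonormal w,
      (forall j, 0 <= s j),
      (forall i j : 'I_d, (i <= j)%N -> s j <= s i) &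
      A = \sum_(j < d) s j *: ((y j)^T *m w j)].

Definition Mell (d k : nat) (lam : 'I_k -> R) (u : 'I_k -> 'rV[R]_d)
    (g : 'rV[R]_d) (T : {set 'I_k}) (l : nat) : 'M[R]_d :=
  \sum_(i in T) (lam i * dotv (u i) g ^+ (l - 2)) *: ((u i)^T *m u i).

Definition qform (d : nat) (A : 'M[R]_d) (x : 'rV[R]_d) : R := (x *m A *m x^T) 0 0.

Definition is_net (d : nat) (ups : R) (X S : set 'rV[R]_d) : Prop :=
  S `<=` X /\ forall x, X x -> exists2 s, S s & vnorm (x - s) <= ups.

(* Unit vectors of a subspace V (given as the row space of a matrix). *)
Definition unit_vectors_of (d m : nat) (V : 'M[R]_(m, d)) : set 'rV[R]_d :=
  [set x | (x <= V)%MS /\ unitv x].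

(* Main.v *)
Require Import Defs.
From HB Require Import structures.
From Stdlib Require Import Reals.
From mathcomp Require Import all_boot all_order all_algebra.
From mathcomp Require Import boolp classical_sets reals Rstruct.
From mathcomp Require Import lra.
Import Order.TTheory GRing.Theory Num.Theory.
Local Open Scope ring_scope.
Local Open Scope classical_set_scope.
Set Implicit Arguments. Unset Strict Implicit.


Section Dot.
Variable d : nat.
Implicit Types x y z : 'rV[R]_d.

Lemma dotvE x y : dotv x y = (x *m y^T) 0 0.
Proof. rewrite /dotv !mxE; apply: eq_bigr => j _; by rewrite mxE. Qed.

Lemma dotvC x y : dotv x y = dotv y x.
Proof. rewrite /dotv; apply: eq_bigr => j _; by rewrite mulrC. Qed.

Lemma dotvDl x y z : dotv (x + y) z = dotv x z + dotv y z.
Proof. rewrite /dotv -big_split; apply: eq_bigr => j _; by rewrite mxE mulrDl. Qed.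

Lemma dotvZl a x y : dotv (a *: x) y = a * dotv x y.
Proof. rewrite /dotv mulr_sumr; apply: eq_bigr => j _; by rewrite mxE mulrA. Qed.

Lemma dotvNl x y : dotv (- x) y = - dotv x y.
Proof. by rewrite -scaleN1r dotvZl mulN1r. Qed.

Lemma dotvBl x y z : dotv (x - y) z = dotv x z - dotv y z.
Proof. by rewrite dotvDl dotvNl. Qed.

Lemma dotvDr x y z : dotv x (y + z) = dotv x y + dotv x z.
Proof. by rewrite dotvC dotvDl !(dotvC x). Qed.
Lemma dotvZr a x y : dotv x (a *: y) = a * dotv x y.
Proof. by rewrite dotvC dotvZl dotvC. Qed.
Lemma dotvBr x y z : dotv x (y - z) = dotv x y - dotv x z.
Proof. by rewrite dotvC dotvBl !(dotvC x). Qed.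

Lemma dotv0l x : dotv 0 x = 0.
Proof. rewrite /dotv big1 // => j _; by rewrite mxE mul0r. Qed.
Lemma dotv0r x : dotv x 0 = 0.
Proof. by rewrite dotvC dotv0l. Qed.

Lemma dotv_suml I (r : seq I) (P : pred I) (F : I -> 'rV[R]_d) y :
  dotv (\sum_(i <- r | P i) F i) y = \sum_(i <- r | P i) dotv (F i) y.
Proof.
elim: r => [|a r IH]; first by rewrite !big_nil dotv0l.
rewrite !big_cons; case: (P a) => //; by rewrite dotvDl IH.
Qed.

Lemma dotv_ge0 x : 0 <= dotv x x.
Proof. apply: sumr_ge0 => j _; by rewrite -expr2 sqr_ge0. Qed.

Lemma dotv_eq0 x : dotv x x = 0 -> x = 0.
Proof.
move=> h; apply/rowP => j; rewrite mxE.
have hp : forall l : 'I_d, predT l -> 0 <= x 0 l * x 0 l.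
  by move=> l _; rewrite -expr2 sqr_ge0.
have := @psumr_eq0P _ _ predT (fun j => x 0 j * x 0 j) hp h j isT.
by move=> /eqP; rewrite mulf_eq0 orbb => /eqP.
Qed.

Lemma CS x y : dotv x y ^+ 2 <= dotv x x * dotv y y.
Proof.
case: (boolP (dotv y y == 0)) => [/eqP y0|ny].
  by rewrite (dotv_eq0 y0) dotv0r expr0n /= dotv0r mulr0 lexx.
have yp : 0 < dotv y y by rewrite lt_def ny dotv_ge0.
set t := dotv x y / dotv y y.
have h := dotv_ge0 (x - t *: y).
rewrite dotvBl !dotvBr !dotvZl !dotvZr (dotvC y x) in h.
have ht : t * dotv y y = dotv x y by rewrite /t mulfVK.
nra.
Qed.

Lemma vnorm_ge0 x : 0 <= vnorm x. Proof. exact: sqrtr_ge0. Qed.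
Lemma vnorm_sq x : vnorm x ^+ 2 = dotv x x.
Proof. by rewrite sqr_sqrtr // dotv_ge0. Qed.

Lemma CSabs x y : `|dotv x y| <= vnorm x * vnorm y.
Proof.
rewrite -ler_sqr ?nnegrE ?mulr_ge0 ?vnorm_ge0 //.
by rewrite exprMn !vnorm_sq real_normK ?num_real // CS.
Qed.

Lemma CSle x y : dotv x y <= vnorm x * vnorm y.
Proof. exact: le_trans (ler_norm _) (CSabs x y). Qed.

Lemma vnorm_tri x y : vnorm (x + y) <= vnorm x + vnorm y.
Proof.
rewrite -ler_sqr ?nnegrE ?addr_ge0 ?vnorm_ge0 //.
rewrite vnorm_sq dotvDl !dotvDr sqrrD !vnorm_sq (dotvC y x).
have := CSle x y; lra.
Qed.

Lemma vnormZ a x : vnorm (a *: x) = `|a| * vnorm x.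
Proof.
by rewrite /vnorm dotvZl dotvZr mulrA -expr2 sqrtrM ?sqr_ge0 // sqrtr_sqr.
Qed.

Lemma unitvP x : unitv x <-> dotv x x = 1.
Proof.
rewrite /unitv; split; last by rewrite /vnorm => ->; rewrite sqrtr1.
by move=> h; rewrite -vnorm_sq h expr1n.
Qed.

End Dot.



Section Two.
Variable d : nat.
Implicit Types x y z : 'rV[R]_d.

Definition rowsmx (w : 'I_d -> 'rV[R]_d) : 'M[R]_d := \matrix_(i, l) w i 0 l.

Lemma rowsmx_orth w : Defs.orthonormal w -> (rowsmx w)^T *m rowsmx w = 1%:M.
Proof.
move=> hw; apply: mulmx1C; apply/matrixP => i l.
rewrite !mxE (_ : (i == l)%:R = dotv (w i) (w l)); last by rewrite hw; case: (i == l).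
rewrite /dotv; apply: eq_bigr => t _; by rewrite !mxE.
Qed.

Lemma mulTrows x (w : 'I_d -> 'rV[R]_d) j : (x *m (rowsmx w)^T) 0 j = dotv x (w j).
Proof. rewrite mxE /dotv; apply: eq_bigr => t _; by rewrite !mxE. Qed.

Lemma parseval (w : 'I_d -> 'rV[R]_d) x : Defs.orthonormal w -> \sum_j dotv x (w j) ^+ 2 = dotv x x.
Proof.
move=> hw.
have -> : \sum_j dotv x (w j) ^+ 2 = dotv (x *m (rowsmx w)^T) (x *m (rowsmx w)^T).
  rewrite /dotv; apply: eq_bigr => j _; by rewrite mulTrows expr2.
rewrite !dotvE trmx_mul trmxK mulmxA -(mulmxA x) rowsmx_orth.
  by rewrite mulmx1.
exact: hw.
Qed.

Lemma vnorm0 : vnorm (0 : 'rV[R]_d) = 0.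
Proof. by rewrite /vnorm dotv0l sqrtr0. Qed.

Lemma rowA_bound (A : 'M[R]_d) z : unitv z ->
  vnorm (z *m A^T) <= Num.sqrt (\sum_j dotv (row j A) (row j A)).
Proof.
move=> /unitvP hz; rewrite /vnorm ler_sqrt ?sumr_ge0 // => [|j _]; last exact: dotv_ge0.
rewrite {1}/dotv; apply: ler_sum => j _.
have -> : (z *m A^T) 0 j = dotv z (row j A).
  rewrite mxE /dotv; apply: eq_bigr => t _; by rewrite !mxE.
by rewrite -expr2; have := CS z (row j A); rewrite hz mul1r.
Qed.

Lemma opnormP (A : 'M[R]_d) x : vnorm (x *m A^T) <= opnorm A * vnorm x.
Proof.
case: (boolP (x == 0)) => [/eqP ->|nx]; first by rewrite mul0mx vnorm0 mulr0.
have xp : 0 < vnorm x.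
  rewrite lt_def vnorm_ge0 andbT; apply/eqP => h.
  have : dotv x x = 0 by rewrite -vnorm_sq h expr0n.
  by move/dotv_eq0; apply/eqP.
set z := (vnorm x)^-1 *: x.
have hz : unitv z.
  apply/unitvP; rewrite /z dotvZl dotvZr -vnorm_sq; by rewrite mulrA -invfM -expr2 mulVf // expf_neq0 // lt0r_neq0.
have hs : has_sup [set vnorm (x *m A^T) | x in [set x : 'rV[R]_d | unitv x]].
  split; first by exists (vnorm (z *m A^T)), z.
  exists (Num.sqrt (\sum_j dotv (row j A) (row j A))) => t [y hy <-].
  exact: rowA_bound.
have := sup_upper_bound hs (ex_intro2 _ _ z hz erefl).
rewrite -/(opnorm A) /z -scalemxAl vnormZ ger0_norm ?invr_ge0 ?vnorm_ge0 //.
move=> h; rewrite -ler_pdivrMr //; by rewrite mulrC.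
Qed.

Lemma qformE (A : 'M[R]_d) r : qform A r = dotv (r *m A^T) r.
Proof.
rewrite /qform dotvE; transitivity (((r *m A *m r^T)^T) 0 0); first by rewrite [RHS]mxE.
by rewrite !trmx_mul trmxK mulmxA.
Qed.

Lemma qformD (A B : 'M[R]_d) r : qform (A + B) r = qform A r + qform B r.
Proof. by rewrite /qform mulmxDr mulmxDl mxE. Qed.
Lemma qformN (A : 'M[R]_d) r : qform (- A) r = - qform A r.
Proof. by rewrite /qform mulmxN mulNmx mxE. Qed.

Lemma qform_sum I (s : seq I) (P : pred I) (F : I -> 'M[R]_d) r :
  qform (\sum_(i <- s | P i) F i) r = \sum_(i <- s | P i) qform (F i) r.
Proof.
elim: s => [|a s IH]; first by rewrite !big_nil /qform mulmx0 mul0mx mxE.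
by rewrite !big_cons; case: (P a) => //; rewrite qformD IH.
Qed.

Lemma qform_rk1 a (y w r : 'rV[R]_d) : qform (a *: (y^T *m w)) r = a * dotv r y * dotv w r.
Proof.
rewrite /qform -scalemxAr -scalemxAl mxE !dotvE mulmxA -(mulmxA _ w) mxE.
rewrite big_ord_recl big_ord0 addr0 mulrA.
by congr (_ * _ * _); apply: congr2; apply: val_inj.
Qed.

End Two.



Section Three.
Variable d : nat.
Implicit Types x y z : 'rV[R]_d.

Definition bform (A : 'M[R]_d) x y := (x *m A *m y^T) 0 0.

Lemma bformT (A : 'M[R]_d) x y : dotv (x *m A^T) y = bform A y x.
Proof.
rewrite /bform dotvE; transitivity (((y *m A *m x^T)^T) 0 0); last by rewrite [LHS]mxE.
by rewrite !trmx_mul trmxK mulmxA.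
Qed.

Lemma bform_sum I (s : seq I) (P : pred I) (F : I -> 'M[R]_d) x y :
  bform (\sum_(i <- s | P i) F i) x y = \sum_(i <- s | P i) bform (F i) x y.
Proof.
elim: s => [|a s IH]; first by rewrite !big_nil /bform mulmx0 mul0mx mxE.
by rewrite !big_cons; case: (P a) => //; rewrite /bform mulmxDr mulmxDl mxE -IH.
Qed.

Lemma bform_rk1 a p q x y : bform (a *: (p^T *m q)) x y = a * dotv x p * dotv q y.
Proof.
rewrite /bform -scalemxAr -scalemxAl mxE !dotvE mulmxA -(mulmxA _ q) mxE.
rewrite big_ord_recl big_ord0 addr0 mulrA.
by congr (_ * _ * _); apply: congr2; apply: val_inj.
Qed.

Lemma svd_qform (Mh : 'M[R]_d) Y W s r (K : 'I_d) :
  is_svd Mh Y W s -> (forall j : 'I_d, (j < K)%N -> dotv (W j) r = 0) ->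
  qform Mh r <= s K * dotv r r.
Proof.
case=> oY oW s0 smono -> hW.
rewrite (_ : qform _ r = bform (\sum_(j < d) s j *: ((Y j)^T *m W j)) r r) //.
rewrite bform_sum.
have -> : s K * dotv r r =
   \sum_(j < d) s K * ((dotv r (Y j) ^+ 2 + dotv r (W j) ^+ 2) / 2).
  rewrite -mulr_sumr -mulr_suml big_split /= !parseval //; lra.
apply: ler_sum => j _; rewrite bform_rk1.
have sK0 := s0 K; have sj0 := s0 j.
set a := dotv r (Y j); set b := dotv (W j) r.
rewrite (dotvC r (W j)) -/b.
case: (ltnP j K) => hj.
  rewrite /b (_ : dotv (W j) r = 0); last exact: hW j hj.
  rewrite mulr0; apply: mulr_ge0 => //; apply: divr_ge0 => //; apply: addr_ge0; exact: sqr_ge0.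
have := smono K j hj => hs.
have h1 : 0 <= (a - b) ^+ 2 by apply: sqr_ge0.
have h2 : 0 <= (s K - s j) * (a ^+ 2 + b ^+ 2).
  by apply: mulr_ge0; [lra | apply: addr_ge0; exact: sqr_ge0].
nra.
Qed.

End Three.



Lemma sum_ge_term (n : nat) (f : 'I_n -> R) l0 :
  (forall l, 0 <= f l) -> f l0 <= \sum_l f l.
Proof.
move=> h; rewrite (bigD1 l0) //=; have : 0 <= \sum_(l | l != l0) f l.
  by apply: sumr_ge0.
lra.
Qed.

Section Four.
Variable d : nat.

Lemma sK_le_eta (M Mh : 'M[R]_d) (k : nat) (hk : (k.+1 <= d)%N) eta Y W s :
  0 <= eta -> (\rank M <= k)%N -> M^T = M -> opnorm (M - Mh) <= eta ->
  is_svd Mh Y W s -> s (widen_ord hk ord_max) <= eta.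
Proof.
move=> eta0 rkM MT hop [oY oW s0 smono hMh].
set K := widen_ord hk ord_max.
set B : 'M[R]_(k.+1, d) := \matrix_(j, l) W (widen_ord hk j) 0 l.
have rowB j : row j B = W (widen_ord hk j) by apply/rowP => l; rewrite !mxE.
set Ker := kermx (B *m M).
have Kn : Ker != 0.
  rewrite -mxrank_eq0 mxrank_ker subn_eq0 -ltnNge.
  by apply: leq_ltn_trans (mxrankM_maxr _ _) _; rewrite ltnS.
have [i hi] : exists i, row i Ker != 0.
  case: (pickP (fun i => row i Ker != 0)) => [i hi|h]; first by exists i.
  move/eqP: Kn; case; apply/row_matrixP => i; have := h i.
  by move=> /= /negbFE /eqP ->; rewrite row0.
set b := row i Ker.
have [j0 hj0] : exists j0, b 0 j0 != 0.
  case: (pickP (fun j => b 0 j != 0)) => [j hj|h]; first by exists j.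
  move/eqP: hi; case; apply/rowP => j; have := h j.
  by move=> /= /negbFE /eqP ->; rewrite mxE.
have hbM : b *m (B *m M) = 0 by rewrite /b -row_mul mulmx_ker row0.
set x := b *m B.
have hxM : x *m M = 0 by rewrite /x -mulmxA.
have hxW l : dotv x (W l) = \sum_(j < k.+1) b 0 j * (widen_ord hk j == l)%:R.
  rewrite /x mulmx_sum_row dotv_suml; apply: eq_bigr => j _.
  by rewrite dotvZl rowB oW; case: (_ == _).
have hxW0 (l : 'I_d) : (k < l)%N -> dotv x (W l) = 0.
  move=> kl; rewrite hxW big1 // => j _.
  have -> : (widen_ord hk j == l) = false.
    apply/negbTE/eqP => e; have := ltn_ord j; rewrite ltnS.
    have -> : (j : nat) = l by rewrite -e.
    by rewrite leqNgt kl.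
  by rewrite mulr0.
have hxWj j : dotv x (W (widen_ord hk j)) = b 0 j.
  rewrite hxW (bigD1 j) //= eqxx mulr1 big1 ?addr0 // => j' hj'.
  have -> : (widen_ord hk j' == widen_ord hk j) = false.
    apply/negbTE; apply: contra hj' => /eqP e; apply/eqP; apply: val_inj.
    exact: (congr1 val e).
  by rewrite mulr0.
have xpos : 0 < dotv x x.
  rewrite -(parseval x oW).
  have h := @sum_ge_term _ (fun l => dotv x (W l) ^+ 2) (widen_ord hk j0) (fun l => sqr_ge0 _).
  rewrite /= hxWj in h.
  have : 0 < b 0 j0 ^+ 2 by rewrite lt_def sqr_ge0 andbT sqrf_eq0.
  lra.
set z := x *m Mh^T.
have hzY l : dotv z (Y l) = s l * dotv x (W l).
  rewrite /z bformT hMh bform_sum (bigD1 l) //= big1 ?addr0.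
    by rewrite bform_rk1 oY eqxx mulr1 dotvC.
  by move=> j hj; rewrite bform_rk1 oY eq_sym (negbTE hj) mulr0 mul0r.
have hzz : dotv z z = \sum_l s l ^+ 2 * dotv x (W l) ^+ 2.
  by rewrite -(parseval z oY); apply: eq_bigr => l _; rewrite hzY exprMn.
have hvz : vnorm z <= eta * vnorm x.
  have := opnormP (M - Mh) x.
  rewrite linearB /= MT mulmxBr hxM sub0r -scaleN1r vnormZ normrN normr1 mul1r.
  move=> h; apply: le_trans h _; apply: ler_wpM2r => //; exact: vnorm_ge0.
have hzx : dotv z z <= eta ^+ 2 * dotv x x.
  have hz0 := vnorm_ge0 z; have hx0 := vnorm_ge0 x.
  rewrite -!vnorm_sq; nra.
have hlow : s K ^+ 2 * dotv x x <= dotv z z.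
  rewrite -(parseval x oW) hzz mulr_sumr; apply: ler_sum => l _.
  case: (ltnP k l) => kl; first by rewrite hxW0 // expr0n /= !mulr0.
  have hs : s K <= s l by apply: smono.
  have := s0 K; have := s0 l; have := sqr_ge0 (dotv x (W l)).
  move=> h1 h2 h3; apply: ler_wpM2r => //; nra.
have sK0 := s0 K.
have h2 : s K ^+ 2 <= eta ^+ 2.
  by rewrite -(ler_pM2r xpos); apply: le_trans hlow hzx.
nra.
Qed.

End Four.



Lemma Mell_fact d k (lam : 'I_k -> R) (u : 'I_k -> 'rV[R]_d) g T l :
  Mell lam u g T l =
  (\matrix_(t, j) u t 0 j)^T *m
   diag_mx (\row_t (if t \in T then lam t * dotv (u t) g ^+ (l - 2) else 0))
   *m (\matrix_(t, j) u t 0 j).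
Proof.
apply/matrixP => a b; rewrite /Mell summxE mul_mx_diag !mxE big_mkcond /=.
apply: eq_bigr => t _; rewrite !mxE.
case: (t \in T); last by rewrite mulr0 mul0r.
rewrite big_ord_recl big_ord0 addr0 !mxE (_ : ord0 = 0) //.
by rewrite mulrA [u t 0 a * _]mulrC.
Qed.

Lemma Mell_props d k (lam : 'I_k -> R) (u : 'I_k -> 'rV[R]_d) g T l :
  (\rank (Mell lam u g T l) <= k)%N /\ (Mell lam u g T l)^T = Mell lam u g T l.
Proof.
rewrite Mell_fact; split.
  by apply: leq_trans (mxrankM_maxr _ _) (rank_leq_row _).
by rewrite !trmx_mul trmxK tr_diag_mx mulmxA.
Qed.

Unset Implicit Arguments. Set Strict Implicit.
Theorem lemma4p8 :
  exists c : R, 0 < c /\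
  forall (d k : nat) (g : 'rV[R]_d) (lam : 'I_k -> R) (u : 'I_k -> 'rV[R]_d)
    (T : {set 'I_k}) (eta : R) (Mhat : 'I_k.+1 -> 'M[R]_d)
    (Y W : 'I_k.+1 -> 'I_d -> 'rV[R]_d) (s : 'I_k.+1 -> 'I_d -> R)
    (i : 'I_k) (u' : 'rV[R]_d) (C1 C2 : R),
    (0 < k)%N ->
    unitv g ->
    (forall j, unitv (u j)) ->
    0 <= eta ->
    (* m indexes l = 2(m+1) in {2, 4, ..., 2k+2} *)
    (forall m : 'I_k.+1, opnorm (Mell lam u g T (m.+1).*2 - Mhat m) <= eta) ->
    (forall m : 'I_k.+1, is_svd (Mhat m) (Y m) (W m) (s m)) ->
    let V := (\sum_(m < k.+1) \sum_(j < d | (j < k)%N) <<W m j>>)%MS in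
    i \in T ->
    (* u' is the orthogonal projection of u_i onto V *)
    (u' <= V)%MS -> (forall v, (v <= V)%MS -> dotv (u i - u') v = 0) ->
    let r := u i - u' in
    0 < C1 -> 0 <= C2 ->
    (exists m : 'I_k.+1,
        qform (Mell lam u g T (m.+1).*2) r >= C1 * dotv r (u i) ^+ 2 - C2) ->
    let ups := c * (Num.sqrt (eta / C1) + Num.sqrt (Num.sqrt (C2 / C1))) in
    forall S : set 'rV[R]_d, is_net ups (unit_vectors_of V) S ->
    exists2 v, S v & vnorm (v - u i) <= 2 * ups.
Proof.
exists 2; split; first by [].
move=> d k g lam u T eta Mhat Y W s i u' C1 C2 k0 hg hu eta0 hop hsvd V iT u'V horth
  r C1p C2p [m hm] ups S [hSsub hS].
have hWV m0 (j : 'I_d) : (j < k)%N -> (W m0 j <= V)%MS.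
  move=> hj; rewrite /V; apply: (sumsmx_sup m0) => //.
  apply: (sumsmx_sup j) => //; by rewrite genmxE.
have hrV v : (v <= V)%MS -> dotv r v = 0 by exact: horth.
set rho := dotv r r.
have rho0 : 0 <= rho by exact: dotv_ge0.
have hui : u i = r + u' by rewrite /r subrK.
clearbody r.
have hru : dotv r (u i) = rho by rewrite hui dotvDr (hrV u' u'V) addr0.
have dpos : (0 < d)%N.
  rewrite lt0n; apply/eqP => d0; have := hu i; move/unitvP.
  move: (u i); subst d => x; rewrite /dotv big_ord0 => h.
  by move: (@oner_neq0 R); rewrite -h eqxx.
have [oW _] : Defs.orthonormal (W m) /\ True by case: (hsvd m).
have hQ : qform (Mell lam u g T (m.+1).*2) r <= 2 * eta * rho.
  set M := Mell lam u g T (m.+1).*2.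
  have [rkM MT] := Mell_props lam u g T (m.+1).*2.
  have -> : qform M r = qform (Mhat m) r + qform (M - Mhat m) r.
    by rewrite -qformD addrC subrK.
  have hE : qform (M - Mhat m) r <= eta * rho.
    rewrite qformE; apply: le_trans (CSle _ _) _.
    apply: le_trans (ler_wpM2r (vnorm_ge0 r) (opnormP _ r)) _.
    rewrite -mulrA (_ : vnorm r * vnorm r = rho); last by rewrite -expr2 vnorm_sq.
    apply: ler_wpM2r => //; exact: hop.
  have hMh : qform (Mhat m) r <= eta * rho.
    case: (ltnP k d) => hk.
      apply: le_trans (svd_qform (K := widen_ord hk ord_max) (hsvd m) _) _.
        move=> j hj; rewrite dotvC; apply: hrV; exact: hWV.
      apply: ler_wpM2r => //.
      exact: (@sK_le_eta d M (Mhat m) k hk eta (Y m) (W m) (s m) eta0 rkM MT (hop m) (hsvd m)).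
    have r0 : rho = 0.
      rewrite /rho -(parseval r oW) big1 // => j _.
      rewrite (hrV _ (hWV m j _)) ?expr0n //.
      exact: leq_trans (ltn_ord j) hk.
    apply: le_trans (svd_qform (K := Ordinal dpos) (hsvd m) _) _.
      move=> j hj; rewrite dotvC; apply: hrV; apply: hWV.
      exact: leq_trans (ltn_ord j) hk.
    by move: r0; rewrite /rho => ->; rewrite !mulr0 lexx.
  lra.
rewrite hru in hm.
set a := eta / C1; set b := C2 / C1.
have ha : eta = a * C1 by rewrite /a divfK // lt0r_neq0.
have hb : C2 = b * C1 by rewrite /b divfK // lt0r_neq0.
have a0 : 0 <= a by apply: divr_ge0 => //; exact: ltW.
have b0 : 0 <= b by apply: divr_ge0 => //; exact: ltW.
have hrho2 : rho ^+ 2 <= 2 * a * rho + b.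
  have : C1 * (rho ^+ 2 - 2 * a * rho - b) <= 0.
    have := le_trans hm hQ; rewrite ha hb; lra.
  rewrite pmulr_rle0 //; lra.
set sb := Num.sqrt b.
have sb0 : 0 <= sb := sqrtr_ge0 _.
have sb2 : sb ^+ 2 = b by rewrite sqr_sqrtr.
have hrho : rho <= 2 * a + sb by nra.
set A := Num.sqrt a; set B := Num.sqrt sb.
have A0 : 0 <= A := sqrtr_ge0 _.
have B0 : 0 <= B := sqrtr_ge0 _.
have A2 : A ^+ 2 = a by rewrite sqr_sqrtr.
have B2 : B ^+ 2 = sb by rewrite sqr_sqrtr.
have hups : ups = 2 * (A + B) by [].
have rho_ups : 2 * rho <= ups ^+ 2 by rewrite hups; nra.
have ups0 : 0 <= ups by rewrite hups; nra.
set nu := dotv u' u'.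
have hu1 : dotv (u i) (u i) = 1 by apply/unitvP.
have hnu : 1 = rho + nu.
  rewrite -hu1 hui dotvDl !dotvDr (dotvC u' r) (hrV u' u'V) /rho /nu; lra.
have [v [vV vu vdot]] : exists v, [/\ (v <= V)%MS, unitv v & 1 - rho <= dotv v (u i)].
  case: (boolP (u' == 0)) => [/eqP u0|un].
    exists (W m (Ordinal dpos)); split.
    - by apply: hWV.
    - by apply/unitvP; rewrite oW eqxx.
    - rewrite hui dotvDr dotvC (hrV _ (hWV m (Ordinal dpos) k0)) u0 dotv0r /nu.
      move: hnu; rewrite /nu u0 dotv0r; lra.
  have n0 := vnorm_ge0 u'.
  have n2 : vnorm u' ^+ 2 = nu by rewrite vnorm_sq.
  have np : 0 < vnorm u'.
    rewrite lt_def n0 andbT; apply/eqP => h; move: un; rewrite -/nu in n2.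
    have : dotv u' u' = 0 by rewrite -vnorm_sq h expr0n.
    by move/dotv_eq0 => ->; rewrite eqxx.
  exists ((vnorm u')^-1 *: u'); split.
  - exact: scalemx_sub.
  - apply/unitvP; rewrite dotvZl dotvZr -vnorm_sq.
    by rewrite mulrA -invfM -expr2 mulVf // expf_neq0 // lt0r_neq0.
  - rewrite dotvZl hui dotvDr (dotvC u' r) (hrV u' u'V) add0r -/nu -n2.
    have -> : (vnorm u')^-1 * vnorm u' ^+ 2 = vnorm u'.
      by rewrite expr2 mulrA mulVf ?mul1r // lt0r_neq0.
    nra.
have hvu : vnorm (v - u i) <= ups.
  have := vnorm_ge0 (v - u i).
  have : vnorm (v - u i) ^+ 2 <= 2 * rho.
    rewrite vnorm_sq dotvBl !dotvBr hu1 (dotvC (u i) v).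
    move/unitvP: vu => ->; lra.
  nra.
have [s0 Ss0 hs0] := hS v (conj vV vu).
exists s0 => //.
have -> : s0 - u i = (s0 - v) + (v - u i) by rewrite addrA subrK.
apply: le_trans (vnorm_tri _ _) _.
have -> : vnorm (s0 - v) = vnorm (v - s0).
  by rewrite -opprB -scaleN1r vnormZ normrN normr1 mul1r.
lra.
Qed.
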